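(* Let $A\overset{i}{\to}U\overset{j}{\to}S$ be an extension of a semilattice of groups $A$ by an inverse semigroup $S$, let $\rho,\rho'$ be transversals of $j$, and let $\Lambda=(\alpha,\lambda,f)$, $\Lambda'=(\alpha',\lambda',f')$ be the twisted $S$-module structures on $A$ induced by $\rho$ and $\rho'$ respectively. Then there is a function $g:S\to A$ with $g(s)\in A_{\alpha(ss^{-1})}$ for all $s$ such that (i) $\alpha'=\alpha$; (ii) $\lambda'_s=\xi_{g(s)}\circ\lambda_s$ for all $s\in S$; (iii) $f'(s,t)g(st)=g(s)\lambda_s(g(t))f(s,t)$ for all $s,t\in S$.
   Context: A semilattice of groups is an inverse semigroup $A$ whose idempotents are central; $A_e=\{a: aa^{-1}=a^{-1}a=e\}$ for $e\in E(A)$. An extension of $A$ by $S$ is an inverse semigroup $U$ with a monomorphism $i:A\to U$ and an idempotent-separating epimorphism $j:U\to S$ with $i(A)=j^{-1}(E(S))$. A transversal of $j$ is a map $\rho:S\to U$ with $j\circ\rho=\mathrm{id}_S$ and $\rho(E(S))\subseteq E(U)$. The twisted $S$-module structure induced by $\rho$ is $(\alpha,\lambda,f)$ where $\alpha=i^{-1}\circ\rho|_{E(S)}:E(S)\to E(A)$, $\lambda_s(a)=i^{-1}(\rho(s)i(a)\rho(s)^{-1})$ for $s\in S,a\in A$, and $f(s,t)$ is the unique element of $A_{\alpha(stt^{-1}s^{-1})}$ with $\rho(s)\rho(t)=i(f(s,t))\rho(st)$. For $b\in A$, $\xi_b$ is the inner endomorphism $\xi_b(a)=bab^{-1}$. 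*)

(* Defs.v *)
Record InvSemigroup := {
  carrier :> Type;
  smul : carrier -> carrier -> carrier;
  sinv : carrier -> carrier;
  smulA : forall x y z, smul x (smul y z) = smul (smul x y) z;
  smul_inv_mul : forall x, smul (smul x (sinv x)) x = x;
  sinv_mul_inv : forall x, smul (smul (sinv x) x) (sinv x) = sinv x;
  sidem_comm : forall e f, smul e e = e -> smul f f = f -> smul e f = smul f e
}.

Arguments smul {_} _ _.
Arguments sinv {_} _.

Definition idempotent {X : InvSemigroup} (e : X) : Prop := smul e e = e.

Definition semilattice_of_groups (A : InvSemigroup) : Prop :=
  forall e a : A, idempotent e -> smul e a = smul a e.

Definition in_group_at {A : InvSemigroup} (e a : A) : Prop :=
  smul a (sinv a) = e /\ smul (sinv a) a = e.

Definition is_hom {X Y : InvSemigroup} (h : X -> Y) : Prop :=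
  forall x y, h (smul x y) = smul (h x) (h y).

Definition is_extension {A U S : InvSemigroup} (i : A -> U) (j : U -> S) : Prop :=
  (is_hom i /\ (forall a b, i a = i b -> a = b)) /\
  (is_hom j /\ (forall s, exists u, j u = s)) /\
  (forall e f : U, idempotent e -> idempotent f -> j e = j f -> e = f) /\
  (forall u : U, (exists a, i a = u) <-> idempotent (j u)).

Definition is_transversal {U S : InvSemigroup} (j : U -> S) (rho : S -> U) : Prop :=
  (forall s, j (rho s) = s) /\ (forall e : S, idempotent e -> idempotent (rho e)).

Definition xi {A : InvSemigroup} (b : A) : A -> A := fun a => smul (smul b a) (sinv b).

(* (alpha, lambda, f) is the twisted S-module structure induced by rho.
   alpha is a total function S -> A of which only the restriction to E(S)
   is meaningful; it is characterised by i (alpha e) = rho e on E(S). *)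
Definition induced_structure {A U S : InvSemigroup} (i : A -> U) (rho : S -> U)
    (alpha : S -> A) (lambda : S -> A -> A) (f : S -> S -> A) : Prop :=
  (forall e : S, idempotent e -> i (alpha e) = rho e) /\
  (forall s a, i (lambda s a) = smul (smul (rho s) (i a)) (sinv (rho s))) /\
  (forall s t,
      in_group_at (alpha (smul (smul (smul s t) (sinv t)) (sinv s))) (f s t) /\
      smul (rho s) (rho t) = smul (i (f s t)) (rho (smul s t))).

(* Main.v *)
Require Import Defs.
From Stdlib Require Import FunctionalExtensionality ClassicalEpsilon.

Ltac assoc := repeat rewrite smulA; reflexivity.

Section Gen.
Variable X : InvSemigroup.
Implicit Types x y w e f : X.

Lemma idem_xxi x : idempotent (smul x (sinv x)).
Proof. unfold idempotent. rewrite smulA, smul_inv_mul. reflexivity. Qed.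
Lemma idem_xix x : idempotent (smul (sinv x) x).
Proof. unfold idempotent. rewrite smulA, sinv_mul_inv. reflexivity. Qed.

Lemma inv_unique x y : smul (smul x y) x = x -> smul (smul y x) y = y -> y = sinv x.
Proof.
  intros H1 H2.
  assert (Iyx : idempotent (smul y x)).
  { unfold idempotent. transitivity (smul (smul (smul y x) y) x). assoc. rewrite H2; reflexivity. }
  assert (Ixy : idempotent (smul x y)).
  { unfold idempotent. transitivity (smul (smul (smul x y) x) y). assoc. rewrite H1; reflexivity. }
  assert (e1 : y = smul (smul (sinv x) x) y).
  { transitivity (smul (smul y (smul (smul x (sinv x)) x)) y).
    rewrite smul_inv_mul, H2; reflexivity.
    transitivity (smul (smul (smul y x) (smul (sinv x) x)) y). assoc.
    rewrite (sidem_comm _ _ _ Iyx (idem_xix x)).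
    transitivity (smul (smul (sinv x) x) (smul (smul y x) y)). assoc.
    rewrite H2; reflexivity. }
  assert (e2 : sinv x = smul (smul (sinv x) x) y).
  { transitivity (smul (smul (sinv x) (smul (smul x y) x)) (sinv x)).
    rewrite H1, sinv_mul_inv; reflexivity.
    transitivity (smul (sinv x) (smul (smul x y) (smul x (sinv x)))). assoc.
    rewrite (sidem_comm _ _ _ Ixy (idem_xxi x)).
    transitivity (smul (smul (smul (sinv x) x) (sinv x)) (smul x y)). assoc.
    rewrite sinv_mul_inv. assoc. }
  rewrite e1, <- e2. reflexivity.
Qed.

Lemma inv_mul x y : sinv (smul x y) = smul (sinv y) (sinv x).
Proof.
  symmetry. apply inv_unique.
  - transitivity (smul (smul x (smul (smul y (sinv y)) (smul (sinv x) x))) y). assoc.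
    rewrite (sidem_comm _ _ _ (idem_xxi y) (idem_xix x)).
    transitivity (smul (smul (smul x (sinv x)) x) (smul (smul y (sinv y)) y)). assoc.
    rewrite !smul_inv_mul. reflexivity.
  - transitivity (smul (smul (sinv y) (smul (smul (sinv x) x) (smul y (sinv y)))) (sinv x)). assoc.
    rewrite <- (sidem_comm _ _ _ (idem_xxi y) (idem_xix x)).
    transitivity (smul (smul (smul (sinv y) y) (sinv y)) (smul (smul (sinv x) x) (sinv x))). assoc.
    rewrite !sinv_mul_inv. reflexivity.
Qed.

Lemma inv_inv x : sinv (sinv x) = x.
Proof. symmetry. apply inv_unique. apply sinv_mul_inv. apply smul_inv_mul. Qed.

Lemma lK1 w x : smul (smul (smul w x) (sinv x)) x = smul w x.
Proof. transitivity (smul w (smul (smul x (sinv x)) x)). assoc. rewrite smul_inv_mul; reflexivity. Qed.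
Lemma lK2 w x : smul (smul (smul w (sinv x)) x) (sinv x) = smul w (sinv x).
Proof. transitivity (smul w (smul (smul (sinv x) x) (sinv x))). assoc. rewrite sinv_mul_inv; reflexivity. Qed.
Lemma lrep w a b c d : smul a b = smul c d -> smul (smul w a) b = smul (smul w c) d.
Proof. intro H. rewrite <- !smulA, H. reflexivity. Qed.

End Gen.

Lemma hom_inv (X Y : InvSemigroup) (h : X -> Y) : is_hom h -> forall x, h (sinv x) = sinv (h x).
Proof.
  intros Hh x. apply inv_unique; rewrite <- !Hh.
  rewrite smul_inv_mul; reflexivity. rewrite sinv_mul_inv; reflexivity.
Qed.
Lemma hom_idem (X Y : InvSemigroup) (h : X -> Y) : is_hom h -> forall x, idempotent x -> idempotent (h x).
Proof. intros Hh x Hx. unfold idempotent in *. rewrite <- Hh, Hx. reflexivity. Qed.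

Theorem proposition3p10 (A U S : InvSemigroup) (i : A -> U) (j : U -> S)
    (rho rho' : S -> U)
    (alpha alpha' : S -> A) (lambda lambda' : S -> A -> A) (f f' : S -> S -> A) :
  semilattice_of_groups A ->
  is_extension i j ->
  is_transversal j rho ->
  is_transversal j rho' ->
  induced_structure i rho alpha lambda f ->
  induced_structure i rho' alpha' lambda' f' ->
  exists g : S -> A,
    (forall s, in_group_at (alpha (smul s (sinv s))) (g s)) /\
    (forall e : S, idempotent e -> alpha' e = alpha e) /\
    (forall s, lambda' s = (fun a => xi (g s) (lambda s a))) /\
    (forall s t, smul (f' s t) (g (smul s t))
                 = smul (smul (g s) (lambda s (g t))) (f s t)).
Proof.
  intros _ [[ih iinj] [[jh jsurj] [jsep jim]]] [rj ridem] [rj' ridem']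
    [Ha [Hl Hf]] [Ha' [Hl' Hf']].
  pose proof (hom_inv _ _ i ih) as iinv.
  pose proof (hom_inv _ _ j jh) as jinv.
  assert (RR : forall e, idempotent e -> rho e = rho' e).
  { intros e He. apply jsep; auto. rewrite rj, rj'; reflexivity. }
  assert (FR1 : forall s, smul (rho s) (sinv (rho s)) = rho (smul s (sinv s))).
  { intro s. apply jsep. apply idem_xxi. apply ridem, idem_xxi.
    rewrite jh, jinv, rj, rj; reflexivity. }
  assert (FR1' : forall s, smul (rho' s) (sinv (rho' s)) = rho (smul s (sinv s))).
  { intro s. rewrite RR by apply idem_xxi. apply jsep. apply idem_xxi. apply ridem', idem_xxi.
    rewrite jh, jinv, rj', rj'; reflexivity. }
  assert (FR2 : forall s, smul (sinv (rho s)) (rho s) = smul (sinv (rho' s)) (rho' s)).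
  { intro s. apply jsep. apply idem_xix. apply idem_xix.
    rewrite !jh, !jinv, rj, rj'; reflexivity. }
  assert (Hex : forall s, exists a, i a = smul (rho' s) (sinv (rho s))).
  { intro s. apply jim. rewrite jh, jinv, rj, rj'. apply idem_xxi. }
  assert (Gex : exists g : S -> A, forall s, i (g s) = smul (rho' s) (sinv (rho s))).
  { exists (fun s => proj1_sig (constructive_indefinite_description _ (Hex s))).
    intro s. exact (proj2_sig (constructive_indefinite_description _ (Hex s))). }
  destruct Gex as [g Gi]. exists g.
  assert (Gi' : forall s, i (sinv (g s)) = smul (rho s) (sinv (rho' s))).
  { intro s. rewrite iinv, Gi, inv_mul, inv_inv. reflexivity. }
  split; [|split; [|split]].
  - intro s. split; apply iinj; rewrite ih, (Ha _ (idem_xxi _ s)), Gi, Gi'.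
    + rewrite smulA, (lrep _ _ _ _ _ _ (FR2 s)), smul_inv_mul, FR1'. reflexivity.
    + rewrite smulA, (lrep _ _ _ _ _ _ (eq_sym (FR2 s))), smul_inv_mul, FR1. reflexivity.
  - intros e He. apply iinj. rewrite Ha, Ha', RR; auto.
  - intro s. apply functional_extensionality. intro a. apply iinj.
    unfold xi. rewrite !ih, Gi, Gi', Hl, Hl'.
    repeat rewrite smulA.
    rewrite !(lrep _ _ _ _ _ _ (FR2 s)), smul_inv_mul, lK2. reflexivity.
  - intros s t. apply iinj. rewrite !ih, Hl, !Gi.
    assert (K : smul (smul (sinv (rho t)) (sinv (rho s))) (i (f s t)) = sinv (rho (smul s t))).
    { rewrite <- inv_mul, (proj2 (Hf s t)), inv_mul, <- smulA, <- iinv, <- ih.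
      destruct (proj1 (Hf s t)) as [_ E]. rewrite E.
      assert (Ie : idempotent (smul (smul (smul s t) (sinv t)) (sinv s))).
      { replace (smul (smul (smul s t) (sinv t)) (sinv s)) with (smul (smul s t) (sinv (smul s t))).
        apply idem_xxi. rewrite inv_mul. assoc. }
      rewrite (Ha _ Ie).
      replace (smul (smul (smul s t) (sinv t)) (sinv s)) with (smul (smul s t) (sinv (smul s t))).
      rewrite <- FR1, smulA, sinv_mul_inv. reflexivity.
      rewrite inv_mul. assoc. }
    transitivity (smul (smul (i (f' s t)) (rho' (smul s t))) (sinv (rho (smul s t)))).
    assoc.
    rewrite <- (proj2 (Hf' s t)), <- K.
    transitivity (smul (smul (smul (smul (rho' s) (smul (sinv (rho s)) (rho s))) (rho' t))
       (smul (sinv (rho t)) (sinv (rho s)))) (i (f s t))).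
    2: assoc.
    rewrite FR2. repeat rewrite smulA. rewrite smul_inv_mul. reflexivity.
Qed.
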